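(* Consider the mesoscopic contact process with sexual reproduction $(\xi_t)$ on $\mathbb{Z}$ with patch size $N\ge 2$, dispersal range $M$ and birth parameters $a,b\ge0$, started from $\xi_0=\mathbf{1}_x$. Call a collision the event that two offspring produced by parents in patch $x$ are sent to the same patch $y\ne x$. For all $M$ sufficiently large: (1) if $a<4$, $P(\text{collision}\mid\xi_0=\mathbf{1}_x)\le M^{-1/3}\big(1/2+bN(1-a/4)^{-1}\big)$; (2) if $a=4$, $P(\text{collision}\mid\xi_0=\mathbf{1}_x)\le M^{-1/3}\big(1/2+(b/2)(N+2)^2\big)$; (3) if $a>4$, $P(\text{collision}\mid\xi_0=\mathbf{1}_x)\le M^{-1/3}\big(1/2+b(a/4-1)^{-2}(a/4)^{N+2}\big)$.
   Context: For $x,y\in\mathbb{Z}$ write $x\sim y$ iff $x\neq y$ and $|x-y|\le M$. The process $\xi_t:\mathbb{Z}\to\{0,\dots,N\}$ counts individuals per patch: $\xi(x)\to\xi(x)-1$ at rate $\xi(x)$; $\xi(x)\to\xi(x)+1$ at rate $\frac{a}{N(N-1)}\xi(x)(\xi(x)-1)(N-\xi(x))$ (offspring of parents in patch $x$ staying in $x$) plus, for each $y\sim x$, rate $\frac{1}{2M}\frac{b}{N(N-1)}\xi(y)(\xi(y)-1)(N-\xi(x))$ (offspring of parents in patch $y$ sent to patch $x$). $\mathbf{1}_x$ is the configuration with $N$ individuals at $x$ and none elsewhere. *)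

(* Defs.v *)
From HB Require Import structures.
From mathcomp Require Import all_boot all_order all_algebra.
From mathcomp Require Import all_classical all_reals all_analysis.
Set Implicit Arguments. Unset Strict Implicit. Unset Printing Implicit Defensive.
Import Order.TTheory GRing.Theory Num.Theory.
Local Open Scope ring_scope.

(* Configurations: xi : int -> nat, xi y = number of individuals in patch y. *)
Definition config := int -> nat.

Definition one_at (N : nat) (x : int) : config := fun y => if y == x then N else 0%N.

Definition nbr (M : nat) (y z : int) : bool := (y != z) && (`|y - z|%N <= M)%N.

(* Elementary transitions ("events"):
   inl z        : death of an individual in patch z  (xi z -> xi z - 1)
   inr (w, z)   : birth of an offspring of parents in patch w, placed in patch z
                  (xi z -> xi z + 1); z = w is a birth staying in w,
                  z ~ w is a dispersal from w to z. *)
Definition event := (int + (int * int))%type.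

Section Process.
Variables (R : realType) (N M : nat) (a b : R) (x : int).

(* Jump rates of the mesoscopic contact process with sexual reproduction.
   Products are taken in nat; they coincide with the paper's expressions
   since 0 <= xi <= N on every reachable configuration. *)
Definition rate (xi : config) (e : event) : R :=
  match e with
  | inl z => (xi z)%:R
  | inr (w, z) =>
      if z == w then
        a / (N * (N - 1))%:R * (xi w * (xi w).-1 * (N - xi w))%:R
      else if nbr M z w then
        (2 * M)%:R^-1 * (b / (N * (N - 1))%:R) * (xi w * (xi w).-1 * (N - xi z))%:R
      else 0
  end.

Definition total_rate (xi : config) : \bar R := \esum_(e in setT) (rate xi e)%:E.

Definition step (xi : config) (e : event) : config :=
  match e with
  | inl z => fun y => if y == z then (xi y).-1 else xi y
  | inr (w, z) => fun y => if y == z then (xi y).+1 else xi y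
  end.

(* H y = true iff some offspring of parents in patch x has already been sent
   to patch y <> x. *)
Definition upd_hit (H : int -> bool) (e : event) : int -> bool :=
  match e with
  | inr (w, z) => if (w == x) && (z != x) then (fun y => (y == z) || H y) else H
  | inl _ => H
  end.

Definition collides (H : int -> bool) (e : event) : bool :=
  match e with
  | inr (w, z) => [&& w == x, z != x & H z]
  | inl _ => false
  end.

(* Pcol n xi H = probability that a collision happens within the next n jumps
   of the process (embedded jump chain: event e occurs with probability
   rate xi e / total_rate xi; if the total rate is 0 the process is absorbed
   and every term vanishes). *)
Fixpoint Pcol (n : nat) (xi : config) (H : int -> bool) : \bar R :=
  match n with
  | 0%N => 0%E
  | n'.+1 =>
      \esum_(e in setT)
        ((rate xi e / fine (total_rate xi))%:E *
         (if collides H e then 1%E else Pcol n' (step xi e) (upd_hit H e)))%E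
  end.

End Process.

Definition P_collision (R : realType) (N M : nat) (a b : R) (x : int) : \bar R :=
  ereal_sup [set Pcol N M a b x n (one_at N x) (fun _ => false) | n in [set: nat]].

(* Main.v *)
Require Import Defs.
From HB Require Import structures.
From mathcomp Require Import all_boot all_order all_algebra.
From mathcomp Require Import all_classical all_reals all_analysis.
From mathcomp Require Import lra ring zify.
From mathcomp Require finmap.
Import Order.TTheory GRing.Theory Num.Theory.
Local Open Scope ring_scope.

Lemma sum_le_support (R : realDomainType) (T : eqType) (s E : seq T) (phi : T -> R) :
  uniq s -> uniq E -> (forall e, phi e != 0 -> e \in E) -> (forall e, e \in E -> 0 <= phi e) ->
  \sum_(e <- s) phi e <= \sum_(e <- E) phi e.
Proof.
move=> us uE supp pos.
rewrite (bigID (fun e => e \in E)) /= [X in _ + X]big1 ?addr0; last first.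
  by move=> e eE; case: (eqVneq (phi e) 0) => // /supp; rewrite (negbTE eE).
rewrite -big_filter.
have -> : \sum_(i <- [seq e <- s | e \in E]) phi i = \sum_(i <- [seq e <- E | e \in s]) phi i.
  apply: perm_big; apply: uniq_perm; rewrite ?filter_uniq // => e.
  by rewrite !mem_filter andbC.
rewrite big_filter [X in _ <= X](bigID (fun e => e \in s)) /=.
rewrite lerDl big_seq_cond; apply: sumr_ge0 => e /andP[eE _]; exact: pos.
Qed.

Lemma arith (R : realFieldType) (a b jr Mr K kr Uw wj D1 D2 rb c0 : R) :
  0 <= a -> 0 <= b -> 2 <= jr -> 1 <= Mr -> 0 <= kr -> 0 <= wj -> wj <= Uw ->
  K = kr + Uw -> 0 <= D2 -> 2 * b <= D1 - a * D2 -> 0 <= rb -> rb <= a * jr ->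
  0 <= c0 -> c0 <= b * jr / (2 * Mr) ->
  -(jr * (K * D1 / Mr)) + rb * (K * D2 / Mr) + c0 * kr + c0 * ((2 * Mr + 1) * (wj / Mr)) <= 0.
Proof.
move=> a0 b0 j2 M1 k0 w0 wU eK D20 hD rb0 rbj c00 c0b.
have Mp : 0 < Mr by lra.
have -> : -(jr * (K * D1 / Mr)) + rb * (K * D2 / Mr) + c0 * kr + c0 * ((2 * Mr + 1) * (wj / Mr))
  = (-(jr*K*D1) + rb*K*D2 + c0*Mr*kr + c0*(2*Mr+1)*wj) / Mr.
  by field; lra.
apply: mulr_le0_ge0; last by rewrite invr_ge0; lra.
have K0 : 0 <= K by lra.
have h1 : rb*K*D2 <= a*jr*K*D2.
  have : 0 <= (a * jr - rb) * (K * D2) by apply: mulr_ge0; [lra | exact: mulr_ge0].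
  lra.
have h2 : c0 * Mr <= b * jr / 2.
  have : c0 * Mr <= b * jr / (2 * Mr) * Mr by apply: ler_wpM2r; lra.
  have -> : b * jr / (2 * Mr) * Mr = b * jr / 2 by field; lra.
  by [].
have h2' : c0 <= b * jr / 2.
  have : c0 <= c0 * Mr by rewrite ler_peMr //; lra.
  lra.
have h3 : c0*Mr*kr <= b*jr/2*kr by apply: ler_wpM2r.
have h4 : c0*(2*Mr+1)*wj <= 3/2 * (b*jr) * wj by apply: ler_wpM2r => //; lra.
have h5 : jr * K * (2 * b) <= jr * K * (D1 - a * D2).
  by apply: ler_wpM2l => //; apply: mulr_ge0 => //; lra.
have h6 : b * jr * wj <= b * jr * Uw.
  by apply: ler_wpM2l => //; apply: mulr_ge0 => //; lra.
have h7 : 0 <= b * jr * kr by apply: mulr_ge0 => //; apply: mulr_ge0 => //; lra.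
have h8 : 0 <= b * jr * Uw by apply: mulr_ge0; [apply: mulr_ge0; lra | lra].
rewrite eK in h5 h1 *.
apply: (@le_trans _ _ (-(jr*(kr+Uw)*D1) + a*jr*(kr+Uw)*D2 + b*jr/2*kr + 3/2*(b*jr)*wj)).
  lra.
have -> : -(jr*(kr+Uw)*D1) + a*jr*(kr+Uw)*D2 + b*jr/2*kr + 3/2*(b*jr)*wj =
  -(jr * (kr + Uw) * (D1 - a * D2)) + b*jr*kr/2 + 3/2*(b*jr*wj) by ring.
have : jr * (kr + Uw) * (2 * b) = 2 * (b*jr*kr) + 2 * (b * jr * Uw) by ring.
lra.
Qed.

Section Pf.
Variables (R : realType) (N M : nat) (a b : R) (x : int).
Hypotheses (hN : (2 <= N)%N) (ha : 0 <= a) (hb : 0 <= b) (hM : (1 <= M)%N).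

Definition lam : R := a + 2 * b + 2.
Definition U : R := lam ^+ N.
Definition w (j : nat) : R := if (j <= 1)%N then 0 else lam ^+ N - lam ^+ (N.+1 - j).

Lemma lam_ge2 : 2 <= lam. Proof. rewrite /lam. have := ha. have := hb. move=> h1 h2. lra. Qed.
Lemma lam_ge1 : 1 <= lam. Proof. have := lam_ge2; lra. Qed.

Lemma lam_mono m n : (m <= n)%N -> lam ^+ m <= lam ^+ n.
Proof. move=> mn; apply: ler_weXn2l => //; exact: lam_ge1. Qed.

Lemma w_ge0 j : 0 <= w j.
Proof.
rewrite /w; case: ifP => // /negbT; rewrite -ltnNge => j2.
rewrite subr_ge0; apply: lam_mono; lia.
Qed.

Lemma w_leU j : w j <= U.
Proof.
rewrite /w /U; case: ifP => _; first by apply: exprn_ge0; have := lam_ge1; lra.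
by rewrite lerBlDr lerDl exprn_ge0 //; have := lam_ge1; lra.
Qed.

Lemma w_mono j : w j <= w j.+1.
Proof.
rewrite /w; case: ifP => j1.
  case: ifP => _ //; rewrite subr_ge0; apply: lam_mono; lia.
have -> : (j.+1 <= 1)%N = false by lia.
rewrite lerD2l lerN2; apply: lam_mono; lia.
Qed.

Lemma w_drift j : (2 <= j <= N)%N ->
  2 * b <= (w j - w j.-1) - a * (w j.+1 - w j).
Proof.
move=> /andP[j2 jN].
have e1 : w j = lam ^+ N - lam ^+ (N - j).+1.
  by rewrite /w ifF; [congr (_ - lam ^+ _); lia | lia].
have e2 : w j.+1 = lam ^+ N - lam ^+ (N - j).
  by rewrite /w ifF; [congr (_ - lam ^+ _); lia | lia].
have e0 : w j.-1 = lam ^+ N - lam ^+ (N - j).+2.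
  rewrite /w; case: ifP => h.
    have -> : j = 2%N by lia.
    have -> : (N - 2).+2 = N by lia.
    by rewrite subrr.
  by congr (_ - lam ^+ _); lia.
rewrite e0 e1 e2 !exprS.
set p := lam ^+ (N - j).
have p1 : 1 <= p by apply: exprn_ege1; exact: lam_ge1.
have -> : lam ^+ N - lam * p - (lam ^+ N - lam * (lam * p)) - a * (lam ^+ N - p - (lam ^+ N - lam * p))
  = (p * (lam - 1)) * (2 * b + 2) by rewrite /lam; ring.
have h1 : 1 <= p * (lam - 1).
  have := lam_ge2 => h; rewrite -[1]mul1r; apply: ler_pM => //; lra.
have := hb => h; nra.
Qed.


Definition nbrs : seq int := [seq x + (i%:Z) - M%:Z | i <- iota 0 (2 * M).+1].

Arguments nbrs : simpl never.

Lemma nbrs_uniq : uniq nbrs.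
Proof.
rewrite map_inj_uniq ?iota_uniq // => i j /= h.
have : (i%:Z = j%:Z)%R by move: h; lia.
by case.
Qed.

Lemma size_nbrs : size nbrs = (2 * M).+1.
Proof. by rewrite size_map size_iota. Qed.

Lemma nbr_mem z : nbr M z x -> z \in nbrs.
Proof.
rewrite /nbr => /andP[_ h]; apply/mapP.
exists `|(z - x + M%:Z)%R|%N; first by rewrite mem_iota; lia.
lia.
Qed.

Definition kH (H : int -> bool) : nat := count H nbrs.

Definition fpot (xi : config) (H : int -> bool) : R :=
  ((kH H)%:R + U) * w (xi x) / M%:R.

Lemma U_ge0 : 0 <= U. Proof. apply: exprn_ge0; have := lam_ge1; lra. Qed.

Lemma fpot_ge0 xi H : 0 <= fpot xi H.
Proof.
rewrite /fpot; apply: divr_ge0 => //; apply: mulr_ge0; last exact: w_ge0.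
by apply: addr_ge0 => //; exact: U_ge0.
Qed.

Definition Inv (xi : config) (H : int -> bool) : Prop :=
  [/\ (xi x <= N)%N, (forall z, z != x -> (xi z <= 1)%N) &
      (forall z, z != x -> (0 < xi z)%N -> H z)].

Lemma rate_ge0 xi e : 0 <= rate N M a b xi e.
Proof.
have := ha => ha'; have := hb => hb'.
case: e => [z|[w' z]] /=; first by [].
case: ifP => _; first by apply: mulr_ge0 => //; apply: divr_ge0.
case: ifP => _ //; apply: mulr_ge0 => //; apply: mulr_ge0 => //; apply: divr_ge0 => //.
Qed.


Definition Y (xi : config) (H : int -> bool) (e : event) : R :=
  if collides x H e then 1 else fpot (step xi e) (upd_hit x H e).

Lemma Y_ge0 xi H e : 0 <= Y xi H e.
Proof. by rewrite /Y; case: ifP => _ //; exact: fpot_ge0. Qed.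

Lemma rate_other xi H w' z : Inv xi H -> w' != x -> rate N M a b xi (inr (w', z)) = 0.
Proof.
move=> [_ h1 _] wx; have : (xi w' * (xi w').-1 = 0)%N.
  by have := h1 _ wx; case: (xi w') => [|[|]].
move=> h0 /=; rewrite h0 mul0n mulr0; case: ifP => // _; case: ifP => //; by rewrite mulr0.
Qed.

Lemma Inv_step xi H e : Inv xi H -> 0 < rate N M a b xi e -> ~~ collides x H e ->
  Inv (step xi e) (upd_hit x H e).
Proof.
move=> I; have I' := I; case: I' => [i1 i2 i3].
case: e => [z|[w' z]] rpos ncol.
- split => /=.
  + by case: ifP => _ //; apply: leq_trans (leq_pred _) i1.
  + by move=> y yx; case: ifP => _; [apply: leq_trans (leq_pred _) (i2 _ yx)|apply: i2].
  + move=> y yx; case: ifP => _ h; apply: i3 => //; lia.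
- case: (eqVneq w' x) => [ewx|wx]; last by rewrite (rate_other xi H w' z I wx) ltxx in rpos.
  subst w'; case: (eqVneq z x) => [ezx|zx].
  + subst z; move: rpos => /=; rewrite eqxx.
    have [jN|jN] := leqP N (xi x).
      have -> : (N - xi x = 0)%N by lia.
      by rewrite muln0 mulr0 ltxx.
    move=> _; split => /=.
    * by rewrite eqxx.
    * by move=> y yx; rewrite (negbTE yx); apply: i2.
    * by move=> y yx; rewrite (negbTE yx); apply: i3.
  + move: ncol rpos => /=; rewrite eqxx zx /= => nH.
    rewrite (negbTE zx); case: ifP => [nb|]; last by rewrite ltxx.
    move=> _.
    have xz0 : xi z = 0%N by case: (posnP (xi z)) => // /(i3 _ zx); rewrite (negbTE nH).
    split => /=.
    * by rewrite eq_sym (negbTE zx).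
    * by move=> y yx; case: ifP => [/eqP ->|_]; [rewrite xz0|apply: i2].
    * move=> y yx; rewrite ?eqxx ?zx /=; case: (eqVneq y z) => //= yz p.
      by apply: i3.
Qed.


Definition c0 (xi : config) : R :=
  (2 * M)%:R^-1 * (b * (xi x * (xi x).-1)%:R / (N - 1)%:R).

Lemma c0_ge0 xi : 0 <= c0 xi.
Proof.
have := hb => hb'.
by rewrite /c0; apply: mulr_ge0 => //; apply: divr_ge0 => //; apply: mulr_ge0.
Qed.

Definition phi0 (xi : config) (H : int -> bool) (e : event) : R :=
  match e with
  | inl _ => 0
  | inr (w', z) =>
    if w' == x then
      if z == x then rate N M a b xi (inr (x, x)) *
                     (((kH H)%:R + U) * (w (xi x).+1 - w (xi x)) / M%:R)
      else if z \in nbrs then c0 xi * ((H z)%:R + w (xi x) / M%:R) else 0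
    else 0
  end.

Lemma fpot_eq xi xi' H : xi' x = xi x -> fpot xi' H = fpot xi H.
Proof. by rewrite /fpot => ->. Qed.

Lemma kH_upd H z : z != x -> (kH (upd_hit x H (inr (x, z))) <= (kH H).+1)%N.
Proof.
move=> zx.
have -> : upd_hit x H (inr (x, z)) = (fun y => (y == z) || H y) by rewrite /= eqxx zx.
rewrite /kH.
have := count_predUI (pred1 z) H nbrs.
have := count_uniq_mem z nbrs_uniq.
have : (nat_of_bool (z \in nbrs) <= 1)%N by case: (z \in nbrs).
move=> h1 h2 h3.
have e : count (fun y => (y == z) || H y) nbrs = count (predU (pred1 z) H) nbrs by [].
rewrite e; apply: (leq_trans (leq_addr (count (predI (pred1 z) H) nbrs) _)).
rewrite h3 h2 -addn1 addnC leq_add2l; by case: (z \in nbrs).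
Qed.

Lemma rate_send_le xi z : z != x -> rate N M a b xi (inr (x, z)) <= c0 xi.
Proof.
move=> zx /=; rewrite (negbTE zx); case: ifP => _; last exact: c0_ge0.
have := hb => hb'.
have N0 : (N%:R : R) != 0 by rewrite pnatr_eq0; lia.
have N1 : ((N - 1)%:R : R) != 0 by rewrite pnatr_eq0; lia.
rewrite /c0 -mulrA; apply: ler_wpM2l; first by rewrite invr_ge0.
rewrite !natrM.
set P := ((xi x)%:R * ((xi x).-1)%:R : R).
set Q := ((N - xi z)%:R : R).
have P0 : 0 <= P by apply: mulr_ge0.
have -> : b / (N%:R * (N - 1)%:R) * (P * Q) = (b * P / (N - 1)%:R) * (Q / N%:R).
  by field; apply/andP; split.
apply: ler_piMr; first by apply: divr_ge0 => //; apply: mulr_ge0.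
rewrite ler_pdivrMr ?mul1r ?ltr0n; last lia.
by rewrite ler_nat; lia.
Qed.

Lemma pointwise xi H e : Inv xi H -> e != inl x ->
  rate N M a b xi e * (Y xi H e - fpot xi H) <= phi0 xi H e.
Proof.
move=> I ex; have I' := I; case: I' => i1 i2 i3.
case: e ex => [z|[w' z]] ex.
- have zx : z != x by move: ex; apply: contra => /eqP ->.
  rewrite /Y /= (@fpot_eq xi); first by rewrite subrr mulr0.
  have xz : (x == z) = false by rewrite eq_sym (negbTE zx).
  by rewrite /= xz.
- case: (eqVneq w' x) => [->|wx]; last first.
    by rewrite (rate_other xi H w' z I wx) mul0r /= (negbTE wx).
  case: (eqVneq z x) => [->|zx].
  + rewrite /phi0 eqxx /Y /= eqxx andbF /=.
    rewrite /fpot /= eqxx.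
    rewrite le_eqVlt; apply/orP; left; apply/eqP; congr (_ * _); rewrite /= ?eqxx; field.
    by rewrite pnatr_eq0; lia.
  + rewrite /phi0 eqxx (negbTE zx).
    case: (boolP (nbr M z x)) => [nb|nnb]; last first.
      rewrite /= (negbTE zx) (negbTE nnb) mul0r; case: ifP => _ //.
      apply: mulr_ge0; first exact: c0_ge0.
      by apply: addr_ge0 => //; apply: divr_ge0 => //; exact: w_ge0.
    rewrite (nbr_mem z nb).
    have B0 : 0 <= (H z)%:R + w (xi x) / M%:R.
      by apply: addr_ge0 => //; apply: divr_ge0 => //; exact: w_ge0.
    apply: (@le_trans _ _ (rate N M a b xi (inr (x, z)) * ((H z)%:R + w (xi x) / M%:R))).
      apply: ler_wpM2l; first exact: rate_ge0.
      rewrite /Y /= eqxx zx /=; case: (boolP (H z)) => Hz /=.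
        have := fpot_ge0 xi H; have : 0 <= w (xi x) / M%:R.
          by apply: divr_ge0 => //; exact: w_ge0.
        lra.
      rewrite add0r lerBlDr.
      rewrite (@fpot_eq xi); last by rewrite /= eq_sym (negbTE zx).
      have hk := kH_upd H z zx.
      rewrite /fpot.
      have hk' : ((kH (fun y => (y == z) || H y))%:R : R) <= (kH H)%:R + 1.
        have -> : (fun y => (y == z) || H y) = upd_hit x H (inr (x, z)) by rewrite /= eqxx zx.
        by have := hk; rewrite -(ler_nat R) -addn1 natrD.
      apply: (@le_trans _ _ (((kH H)%:R + 1 + U) * w (xi x) / M%:R)).
        apply: ler_wpM2r; first by rewrite invr_ge0.
        apply: ler_wpM2r; first exact: w_ge0.
        by rewrite lerD2r.
      by rewrite le_eqVlt; apply/orP; left; apply/eqP; ring.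
    by apply: ler_wpM2r => //; exact: rate_send_le.
Qed.


Definition E1 : seq event :=
  inr (x, x) :: [seq inr (x, z) | z <- [seq z <- nbrs | z != x]].

Lemma E1_uniq : uniq E1.
Proof.
rewrite /E1 cons_uniq map_inj_uniq ?filter_uniq ?nbrs_uniq //; last by move=> u v [].
rewrite andbT; apply/mapP => -[z]; rewrite mem_filter => /andP[zx _] [].
by move=> e; rewrite e eqxx in zx.
Qed.

Lemma phi0_ge0 xi H e : 0 <= phi0 xi H e.
Proof.
case: e => [z|[w' z]] //; rewrite /phi0; case: ifP => _ //; case: ifP => _.
  apply: mulr_ge0; first exact: rate_ge0.
  apply: divr_ge0 => //; apply: mulr_ge0; first by apply: addr_ge0 => //; exact: U_ge0.
  by rewrite subr_ge0; exact: w_mono.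
case: ifP => _ //; apply: mulr_ge0; first exact: c0_ge0.
by apply: addr_ge0 => //; apply: divr_ge0 => //; exact: w_ge0.
Qed.

Lemma phi0_supp xi H e : phi0 xi H e != 0 -> e \in E1.
Proof.
case: e => [z|[w' z]]; rewrite /phi0; first by rewrite eqxx.
case: (eqVneq w' x) => [->|wx]; last by rewrite eqxx.
case: (eqVneq z x) => [->|zx]; first by rewrite inE eqxx.
case: ifP => zn; last by rewrite eqxx.
move=> _; rewrite inE; apply/orP; right; apply/mapP; exists z => //.
by rewrite mem_filter zx.
Qed.

Lemma sum_lin (l : seq int) (H : int -> bool) (c q : R) :
  \sum_(z <- l) c * ((H z)%:R + q) = c * ((count H l)%:R + (size l)%:R * q).
Proof.
elim: l => [|z l IH]; first by rewrite big_nil /= !mul0r addr0 mulr0.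
rewrite big_cons IH /= -addn1 !natrD.
by case: (H z) => /=; ring.
Qed.


Lemma sumE1 xi H : Inv xi H ->
  rate N M a b xi (inl x) * (Y xi H (inl x) - fpot xi H) + \sum_(e <- E1) phi0 xi H e <= 0.
Proof.
move=> I; have I' := I; case: I' => i1 i2 i3.
have := ha => ha'; have := hb => hb'.
have Mp : (0 < M%:R :> R) by rewrite ltr0n.
set j := xi x. set k := kH H.
set fl := [seq z <- nbrs | z != x].
have eY : Y xi H (inl x) = (k%:R + U) * w j.-1 / M%:R.
  by rewrite /Y /= /fpot /= eqxx.
have er : rate N M a b xi (inl x) = j%:R by [].
have eS : \sum_(e <- E1) phi0 xi H e = phi0 xi H (inr (x, x)) +
    c0 xi * ((count H fl)%:R + (size fl)%:R * (w j / M%:R)).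
  rewrite /E1 big_cons big_map -sum_lin; congr (_ + _).
  apply: eq_big_seq => z; rewrite mem_filter => /andP[zx zn].
  by rewrite /phi0 eqxx (negbTE zx) zn.
have ephi : phi0 xi H (inr (x, x)) = rate N M a b xi (inr (x, x)) *
    ((k%:R + U) * (w j.+1 - w j) / M%:R) by rewrite /phi0 eqxx.
rewrite eY er eS ephi /fpot -/j -/k.
have [j1|j2] := leqP j 1.
  have w1 : w j = 0 by rewrite /w j1.
  have w2 : w j.-1 = 0 by rewrite /w ifT //; lia.
  have jj : (j * j.-1 = 0)%N by case: (j) j1 => [|[|]].
  have r0 : rate N M a b xi (inr (x, x)) = 0 by rewrite /= eqxx -/j jj !mul0n mulr0.
  have c00 : c0 xi = 0 by rewrite /c0 -/j jj mulr0 mul0r mulr0.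
  by rewrite r0 c00 w1 w2 !mulr0 !mul0r subrr mulr0 !add0r.
set K := k%:R + U.
have cntk : ((count H fl)%:R : R) <= k%:R.
  by rewrite ler_nat /fl count_filter; apply: sub_count => z /andP[].
have szM : ((size fl)%:R : R) <= 2 * M%:R + 1.
  have : (size fl <= (2 * M).+1)%N by rewrite -size_nbrs size_filter count_size.
  by rewrite -(ler_nat R) -addn1 natrD natrM.
apply: (@le_trans _ _ (-(j%:R * (K * (w j - w j.-1) / M%:R)) +
   rate N M a b xi (inr (x, x)) * (K * (w j.+1 - w j) / M%:R) +
   c0 xi * k%:R + c0 xi * ((2 * M%:R + 1) * (w j / M%:R)))).
  have -> : j%:R * (K * w j.-1 / M%:R - K * w j / M%:R) = -(j%:R * (K * (w j - w j.-1) / M%:R)) by ring.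
  rewrite -!addrA lerD2l lerD2l -mulrDr; apply: ler_wpM2l; first exact: c0_ge0.
  apply: lerD => //; apply: ler_wpM2r => //.
  by apply: divr_ge0 => //; exact: w_ge0.
apply: (@arith R a b j%:R M%:R K k%:R U (w j) (w j - w j.-1) (w j.+1 - w j)
  (rate N M a b xi (inr (x, x))) (c0 xi) ha hb).
- by rewrite (ler_nat R 2 j).
- by rewrite (ler_nat R 1 M).
- by [].
- exact: w_ge0.
- exact: w_leU.
- by [].
- by rewrite subr_ge0; exact: w_mono.
- by apply: w_drift; rewrite j2.
- exact: rate_ge0.
- rewrite /= eqxx -/j.
  have NN : (0 < (N * (N - 1))%:R :> R) by rewrite ltr0n; lia.
  have hn : (j * j.-1 * (N - j) <= j * (N * (N - 1)))%N.
    rewrite -mulnA leq_mul2l; apply/orP; right.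
    rewrite mulnC; apply: leq_mul; lia.
  apply: (@le_trans _ _ (a / (N * (N - 1))%:R * (j * (N * (N - 1)))%:R)).
    by apply: ler_wpM2l; [apply: divr_ge0 | rewrite ler_nat].
  have N0 : (N%:R : R) != 0 by rewrite pnatr_eq0; lia.
  have N1 : ((N - 1)%:R : R) != 0 by rewrite pnatr_eq0; lia.
  rewrite le_eqVlt; apply/orP; left; apply/eqP.
  rewrite !natrM; field; apply/andP; split => //.
- exact: c0_ge0.
- rewrite /c0 -/j.
  have hn : (j * j.-1 <= j * (N - 1))%N by rewrite leq_mul2l; apply/orP; right; lia.
  have N1 : (0 < (N - 1)%:R :> R) by rewrite ltr0n; lia.
  apply: (@le_trans _ _ ((2 * M)%:R^-1 * (b * (j * (N - 1))%:R / (N - 1)%:R))).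
    apply: ler_wpM2l; first by rewrite invr_ge0.
    apply: ler_wpM2r; first by rewrite invr_ge0 ltW.
    by apply: ler_wpM2l => //; rewrite ler_nat.
  rewrite le_eqVlt; apply/orP; left; apply/eqP.
  rewrite !natrM; field; apply/andP; split; [exact: lt0r_neq0 | exact: lt0r_neq0].
Qed.


Lemma seq_bound xi H (t : R) (s : seq event) : Inv xi H -> 0 < t -> uniq s ->
  (forall s', uniq s' -> \sum_(e <- s') rate N M a b xi e <= t) ->
  \sum_(e <- s) (rate N M a b xi e / t * Y xi H e) <= fpot xi H.
Proof.
move=> I t0 us hT.
set h := fun e => rate N M a b xi e / t * Y xi H e.
have h0 : forall e, 0 <= h e.
  move=> e; apply: mulr_ge0; last exact: Y_ge0.
  by apply: divr_ge0; [exact: rate_ge0 | exact: ltW].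
set s1 := if inl x \in s then s else inl x :: s.
have us1 : uniq s1 by rewrite /s1; case: ifP => // /negbT nx; rewrite cons_uniq nx us.
have xs1 : inl x \in s1 by rewrite /s1; case: ifP => // _; rewrite inE eqxx.
apply: (@le_trans _ _ (\sum_(e <- s1) h e)).
  by rewrite /s1; case: ifP => // _; rewrite big_cons lerDr.
set psi := fun e => rate N M a b xi e * (Y xi H e - fpot xi H).
have eh : \sum_(e <- s1) h e =
    t^-1 * (fpot xi H * \sum_(e <- s1) rate N M a b xi e + \sum_(e <- s1) psi e).
  rewrite (eq_bigr (fun e => t^-1 * (rate N M a b xi e * fpot xi H + psi e))); last first.
    by move=> e _; rewrite /h /psi; field; exact: lt0r_neq0.
  rewrite -mulr_sumr big_split /= -mulr_suml; congr (_ * (_ + _)).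
  by rewrite mulrC.
have Psi : \sum_(e <- s1) psi e <= 0.
  rewrite (bigD1_seq (inl x)) //=.
  apply: (le_trans _ (sumE1 xi H I)); rewrite lerD2l.
  apply: (@le_trans _ _ (\sum_(e <- s1 | e != inl x) phi0 xi H e)).
    by apply: ler_sum => e ex; exact: pointwise.
  apply: (@le_trans _ _ (\sum_(e <- s1) phi0 xi H e)).
    by rewrite [X in _ <= X](bigD1_seq (inl x)) //= add0r.
  apply: sum_le_support => //; [exact: E1_uniq | exact: phi0_supp | move=> e _; exact: phi0_ge0].
rewrite eh.
have R1 := hT s1 us1.
have f0 := fpot_ge0 xi H.
rewrite ler_pdivrMl // mulrC; apply: (@le_trans _ _ (fpot xi H * \sum_(e <- s1) rate N M a b xi e)).
  by rewrite [X in _ <= X]mulrC; have := Psi; lra.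
by rewrite [X in _ <= X]mulrC; apply: ler_wpM2l.
Qed.


Lemma esum_bound xi H : Inv xi H ->
  (\esum_(e in [set: event]) ((rate N M a b xi e / fine (total_rate N M a b xi) * Y xi H e)%:E)
     <= (fpot xi H)%:E)%E.
Proof.
move=> I.
have T0 : (0 <= total_rate N M a b xi)%E.
  by apply: esum_ge0 => e _; rewrite lee_fin; exact: rate_ge0.
have hT : forall s', uniq s' -> ((\sum_(e <- s') rate N M a b xi e)%:E <= total_rate N M a b xi)%E.
  move=> s' us'; rewrite -sumEFin (fsbig_seq _ _ us').
  apply: esum_ge; exists [set` s']%classic => //; split => //; exact: finite_seq.
case E : (total_rate N M a b xi) => [t| |] /=; last first.
- by rewrite E in T0.
- rewrite esum1 ?lee_fin ?fpot_ge0 // => e _; by rewrite invr0 mulr0 mul0r.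
have t0 : 0 <= t by rewrite -lee_fin -E.
case: (eqVneq t 0) => [->|tn0].
  rewrite esum1 ?lee_fin ?fpot_ge0 // => e _; by rewrite invr0 mulr0 mul0r.
have tp : 0 < t by rewrite lt_neqAle eq_sym tn0.
apply: ge_ereal_sup => _ [A [finA _] <-].
rewrite (fsbig_finite _ _ finA) /= sumEFin lee_fin.
apply: seq_bound => //; first exact: finmap.fset_uniq.
by move=> s' us'; rewrite -lee_fin -E; exact: hT.
Qed.

Lemma Pcol_bound n : forall xi H, Inv xi H -> (Pcol N M a b x n xi H <= (fpot xi H)%:E)%E.
Proof.
elim: n => [|n IH] xi H I; first by rewrite /= lee_fin fpot_ge0.
apply: (le_trans _ (esum_bound xi H I)).
rewrite /=; apply: le_esum => e _.
have p0 : 0 <= rate N M a b xi e / fine (total_rate N M a b xi).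
  apply: divr_ge0; first exact: rate_ge0.
  by apply: fine_ge0; apply: esum_ge0 => e' _; rewrite lee_fin; exact: rate_ge0.
case: (eqVneq (rate N M a b xi e) 0) => [r0|rn0].
  by rewrite r0 !mul0r mul0e.
set p := rate N M a b xi e / fine (total_rate N M a b xi).
rewrite /Y; case: ifP => col; first by rewrite EFinM.
have -> : (p * fpot (step xi e) (upd_hit x H e))%:E = (p%:E * (fpot (step xi e) (upd_hit x H e))%:E)%E
  by rewrite EFinM.
apply: lee_wpmul2l; first by rewrite lee_fin.
apply: IH; apply: Inv_step => //; last by rewrite col.
by rewrite lt_neqAle eq_sym rn0 rate_ge0.
Qed.

End Pf.
Lemma num_bound (R : realType) (C Mr : R) : 1 <= C -> C ^+ 3 < Mr ->
  C / 2 / Mr <= Mr `^ (- 3^-1) / 2.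
Proof.
move=> C1 CM.
have C0 : 0 < C ^+ 3 by apply: exprn_gt0; lra.
have Mp : 0 < Mr by lra.
set q := Mr `^ (3^-1).
have qp : 0 < q by apply: powR_gt0.
have q3 : q ^+ 3 = Mr.
  rewrite /q -powR_mulrn ?ltW // -powRrM mulVf ?powRr1 ?ltW //.
have qC : C < q.
  rewrite ltNge; apply/negP => qC.
  have : q ^+ 3 <= C ^+ 3 by apply: lerXn2r => //; rewrite ?nnegrE ltW //; lra.
  rewrite q3; lra.
have q2 : C <= q ^+ 2.
  have : q <= q ^+ 2 by rewrite expr2 ler_peMl //; lra.
  lra.
rewrite powRN -/q -q3.
have -> : C / 2 / q ^+ 3 = (C / q ^+ 2) * (q^-1 / 2).
  by field; apply: lt0r_neq0.
rewrite -[X in _ <= X]mul1r; apply: ler_wpM2r.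
  by apply: divr_ge0; [rewrite invr_ge0 ltW | ].
by rewrite ler_pdivrMr ?mul1r // exprn_gt0.
Qed.

Theorem lemma5p2 (R : realType) (N : nat) (a b : R) (x : int) :
  (2 <= N)%N -> 0 <= a -> 0 <= b ->
  exists M0 : nat, forall M : nat, (M0 <= M)%N ->
    let bound := (M%:R : R) `^ (- 3^-1) in
    [/\ a < 4 ->
          (P_collision N M a b x <= (bound * (2^-1 + b * N%:R * (1 - a / 4)^-1))%:E)%E,
        a = 4 ->
          (P_collision N M a b x <= (bound * (2^-1 + b / 2 * (N%:R + 2) ^+ 2))%:E)%E
      & 4 < a ->
          (P_collision N M a b x
             <= (bound * (2^-1 + b * (a / 4 - 1) ^- 2 * (a / 4) ^+ (N + 2)))%:E)%E].
Proof.
move=> hN ha hb.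
set Uv := U R N a b.
have U1 : 1 <= Uv by rewrite /Uv /U; apply: exprn_ege1; exact: lam_ge1.
set C := 2 * Uv ^+ 2.
have C1 : 1 <= C.
  have : 1 <= Uv ^+ 2 by apply: exprn_ege1.
  rewrite /C; lra.
exists (Num.truncn (C ^+ 3)).+1 => M hM0 bound.
have hM : (1 <= M)%N by apply: leq_trans hM0.
have CM : C ^+ 3 < M%:R.
  apply: lt_le_trans (truncnS_gt _) _; by rewrite ler_nat.
have key : (P_collision N M a b x <= (bound / 2)%:E)%E.
  apply: ge_ereal_sup => _ [n _ <-].
  apply: (le_trans (Pcol_bound R N M a b x hN ha hb hM n (one_at N x) (fun _ => false) _)).
    split; first by rewrite /one_at eqxx.
      by move=> z zx; rewrite /one_at (negbTE zx).
    by move=> z zx; rewrite /one_at (negbTE zx).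
  rewrite lee_fin /fpot.
  have -> : kH M x (fun _ => false) = 0%N by rewrite /kH; elim: (nbrs M x).
  have -> : one_at N x x = N by rewrite /one_at eqxx.
  apply: (@le_trans _ _ (C / 2 / M%:R)); last exact: num_bound.
  have Mp : (0 < M%:R :> R) by rewrite ltr0n.
  rewrite ler_pM2r ?invr_gt0 // add0r /C.
  have -> : 2 * Uv ^+ 2 / 2 = Uv * Uv by rewrite expr2; field.
  rewrite -/Uv; apply: ler_wpM2l; first lra.
  exact: w_leU.
have b0 : 0 <= bound by apply: powR_ge0.
have fin : forall e, 0 <= e -> (P_collision N M a b x <= (bound * (2^-1 + e))%:E)%E.
  move=> e e0; apply: le_trans key _; rewrite lee_fin.
  rewrite mulrDr; have : 0 <= bound * e by apply: mulr_ge0.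
  lra.
split => h.
- apply: fin; apply: mulr_ge0; first by apply: mulr_ge0.
  rewrite invr_ge0; lra.
- by apply: fin; apply: mulr_ge0; [apply: divr_ge0 | apply: sqr_ge0].
- apply: fin; apply: mulr_ge0; last by apply: exprn_ge0; lra.
  by apply: mulr_ge0 => //; rewrite invr_ge0; apply: exprn_ge0; lra.
Qed.
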